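(* Let $\mathbf{FT}$ denote the category whose objects are the finite games that are trivial for Alice and whose morphisms are game embeddings. There is a Fraïssé sequence $F\colon\omega\to\mathbf{FT}$ — i.e. (U) every object $X$ of $\mathbf{FT}$ admits a game embedding $X\to F(n)$ for some $n$, and (A) for every $n$ and every game embedding $f\colon F(n)\to X$ with $X$ in $\mathbf{FT}$ there are $m\ge n$ and a game embedding $g\colon X\to F(m)$ with $g\circ f=F_n^m$ — whose colimit in $\mathbf{Games}_A$ is $G_{FL}=(\omega^{<\omega},c_{00}(\omega))$.
   Context: A game tree is $T\subseteq M^{<\omega}$ (some set $M$) closed under initial segments such that every $t\in T$ has an extension $t^\frown x\in T$; $|t|$ is the length, $t\restriction k$ the initial segment of length $k$. $\mathrm{Run}(T)=\{R\in M^\omega:R\restriction n\in T\ \forall n\}$. A game is $(T,A)$ with $A\subseteq\mathrm{Run}(T)$; finite if $\mathrm{Run}(T)$ is finite; trivial for Alice if $A=\mathrm{Run}(T)$. A chronological map $f\colon T_1\to T_2$ satisfies $|f(t)|=|t|$, $f(t\restriction k)=f(t)\restriction k$, inducing $\bar f$ on runs via $\bar f(R)\restriction n=f(R\restriction n)$. $\mathbf{Games}_A$ is the category of games with A-morphisms (chronological $f$ with $\bar f[A_1]\subseteq A_2$). A game embedding is an injective chronological $f$ with $\bar f(R)\in A_2\iff R\in A_1$ for all runs $R$. $\omega$ is a category via its order and $F_n^m=F(n\le m)$. $c_{00}(\omega)$ is the set of eventually zero sequences in $\omega^\omega$. *)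

(* Defs.v *)
From mathcomp Require Import all_boot.
Set Implicit Arguments. Unset Strict Implicit. Unset Printing Implicit Defensive.

(* A game tree over M: a set of finite sequences closed under initial segments
   in which every node has an immediate extension; the game has a set A of
   winning runs (for Alice) included in the set of runs. *)
Record Game (M : Type) := MkGame {
  tree : seq M -> Prop;
  acc : (nat -> M) -> Prop;
  tree_closed : forall t k, tree t -> tree (take k t);
  tree_ext : forall t, tree t -> exists x, tree (rcons t x);
  acc_runs : forall R, acc R -> forall n, tree (mkseq R n)
}.

(* R restricted to n is mkseq R n = [:: R 0; ...; R n.-1]. *)
Definition Run (M : Type) (G : Game M) (R : nat -> M) : Prop :=
  forall n, tree G (mkseq R n).

(* Finite game: Run(T) is finite (runs compared extensionally). *)
Definition finite_game (M : Type) (G : Game M) : Prop :=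
  exists (N : nat) (e : nat -> nat -> M),
    forall R, Run G R -> exists2 i, i < N & forall k, R k = e i k.

Definition trivial_for_Alice (M : Type) (G : Game M) : Prop :=
  forall R, Run G R -> acc G R.

Definition FT_obj (M : Type) (G : Game M) : Prop :=
  finite_game G /\ trivial_for_Alice G.

(* Chronological map T1 -> T2 (only its values on T1 matter). *)
Definition chronological (M1 M2 : Type) (G1 : Game M1) (G2 : Game M2)
  (f : seq M1 -> seq M2) : Prop :=
  forall t, tree G1 t ->
    [/\ tree G2 (f t), size (f t) = size t &
        forall k, f (take k t) = take k (f t)].

Definition induced_run (M1 M2 : Type) (f : seq M1 -> seq M2)
  (R : nat -> M1) (S : nat -> M2) : Prop :=
  forall n, f (mkseq R n) = mkseq S n.

Definition A_morphism (M1 M2 : Type) (G1 : Game M1) (G2 : Game M2)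
  (f : seq M1 -> seq M2) : Prop :=
  chronological G1 G2 f /\
  forall R S, acc G1 R -> induced_run f R S -> acc G2 S.

Definition game_embedding (M1 M2 : Type) (G1 : Game M1) (G2 : Game M2)
  (f : seq M1 -> seq M2) : Prop :=
  [/\ chronological G1 G2 f,
      (forall s t, tree G1 s -> tree G1 t -> f s = f t -> s = t) &
      forall R S, Run G1 R -> induced_run f R S -> (acc G1 R <-> acc G2 S)].

Definition eq_on (M1 M2 : Type) (G : Game M1) (f g : seq M1 -> seq M2) : Prop :=
  forall t, tree G t -> f t = g t.

Definition c00 (R : nat -> nat) : Prop := exists N, forall k, N <= k -> R k = 0.

Lemma GFL_closed : forall (t : seq nat) (k : nat), True -> True.
Proof. by []. Qed.

Lemma GFL_ext : forall (t : seq nat), True -> exists x : nat, True.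
Proof. by move=> _ _; exists 0. Qed.

Lemma GFL_runs : forall R, c00 R -> forall n : nat, True.
Proof. by []. Qed.

Definition G_FL : Game nat :=
  @MkGame nat (fun _ => True) c00 GFL_closed GFL_ext GFL_runs.

(* A functor F : omega -> FT, given by objects F n over sets M n and maps
   Fmap n m = F_n^m (only used for n <= m). *)
Definition functor_omega_FT (M : nat -> Type) (F : forall n, Game (M n))
  (Fmap : forall n m, seq (M n) -> seq (M m)) : Prop :=
  [/\ (forall n, FT_obj (F n)),
      (forall n m, n <= m -> game_embedding (F n) (F m) (Fmap n m)),
      (forall n, eq_on (F n) (Fmap n n) id) &
      (forall n m k, n <= m -> m <= k ->
         eq_on (F n) (fun t => Fmap m k (Fmap n m t)) (Fmap n k))].

Definition fraisse_sequence (M : nat -> Type) (F : forall n, Game (M n))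
  (Fmap : forall n m, seq (M n) -> seq (M m)) : Prop :=
  functor_omega_FT F Fmap /\
  (forall (N : Type) (X : Game N), FT_obj X ->
     exists n (g : seq N -> seq (M n)), game_embedding X (F n) g) /\
  (forall n (N : Type) (X : Game N) (f : seq (M n) -> seq N),
     FT_obj X -> game_embedding (F n) X f ->
     exists m (g : seq N -> seq (M m)),
       [/\ n <= m, game_embedding X (F m) g &
           eq_on (F n) (fun t => g (f t)) (Fmap n m)]).

Definition is_colimit_GamesA (M : nat -> Type) (F : forall n, Game (M n))
  (Fmap : forall n m, seq (M n) -> seq (M m))
  (C : Type) (GC : Game C) (phi : forall n, seq (M n) -> seq C) : Prop :=
  [/\ (forall n, A_morphism (F n) GC (phi n)),
      (forall n m, n <= m -> eq_on (F n) (fun t => phi m (Fmap n m t)) (phi n)) &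
      (forall (N : Type) (H : Game N) (psi : forall n, seq (M n) -> seq N),
         (forall n, A_morphism (F n) H (psi n)) ->
         (forall n m, n <= m -> eq_on (F n) (fun t => psi m (Fmap n m t)) (psi n)) ->
         exists h : seq C -> seq N,
           [/\ A_morphism GC H h,
               (forall n, eq_on (F n) (fun t => h (phi n t)) (psi n)) &
               (forall h' : seq C -> seq N, A_morphism GC H h' ->
                  (forall n, eq_on (F n) (fun t => h' (phi n t)) (psi n)) ->
                  eq_on GC h' h)])].

(* Main.v *)
Require Import Defs.
From mathcomp Require Import all_boot.
From Stdlib Require Import Classical ClassicalEpsilon.
From mathcomp Require Import zify.
Unset Printing Implicit Defensive.

Definition tn (n : nat) (t : seq nat) : Prop :=
  forall j, j < size t -> nth 0 t j <= n /\ (n <= j -> nth 0 t j = 0).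

Lemma tn_take n : forall t k, tn n t -> tn n (take k t).
Proof.
move=> t k H j; rewrite size_take_min => Hj.
have Hjk : j < k by lia.
have Hjt : j < size t by lia.
by rewrite nth_take //; apply: H.
Qed.

Lemma tn_ext n : forall t, tn n t -> exists x, tn n (rcons t x).
Proof.
move=> t H; exists 0 => j; rewrite size_rcons ltnS nth_rcons => Hj.
case: ltnP => Hjt; first by apply: H.
by rewrite (_ : j == size t); last by rewrite eqn_leq Hj Hjt.
Qed.

Definition accn n (R : nat -> nat) : Prop := forall k, tn n (mkseq R k).

Lemma accn_runs n : forall R, accn n R -> forall k, tn n (mkseq R k).
Proof. by []. Qed.

Definition Fg (n : nat) : Game nat := @MkGame nat (tn n) (accn n) (@tn_take n) (@tn_ext n) (@accn_runs n).

Lemma take_mkseq (T : Type) (R : nat -> T) k n : take k (mkseq R n) = mkseq R (minn k n).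
Proof. by rewrite /mkseq -map_take take_iota. Qed.

Lemma accn_iff n R : accn n R <-> forall j, R j <= n /\ (n <= j -> R j = 0).
Proof.
split=> H.
  move=> j; have := H j.+1 j; rewrite size_mkseq nth_mkseq //; apply; done.
by move=> k j; rewrite size_mkseq => Hj; rewrite nth_mkseq //; apply: H.
Qed.

Fixpoint enumerate (b n : nat) : seq (seq nat) :=
  match n with 0 => [:: [::]] | n'.+1 => [seq x :: s | x <- iota 0 b.+1, s <- enumerate b n'] end.

Lemma enumerate_mem b n s : size s = n -> (forall j, j < n -> nth 0 s j <= b) -> s \in enumerate b n.
Proof.
elim: n s => [|n IH] [|x s] //= [Hs] H.
have Hx : x \in iota 0 b.+1 by rewrite mem_iota /= add0n ltnS; apply: (H 0).
have Hs' : s \in enumerate b n by apply: IH => // j Hj; apply: (H j.+1).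
exact: (allpairs_f (fun x s => x :: s) Hx Hs').
Qed.

Lemma Fg_FT n : FT_obj (Fg n).
Proof.
split; last by move=> R HR k; apply: HR.
exists (size (enumerate n n)), (fun i k => nth 0 (nth [::] (enumerate n n) i) k).
move=> R HR; have /accn_iff HR' : accn n R by [].
have Hm : mkseq R n \in enumerate n n.
  by apply: enumerate_mem; rewrite ?size_mkseq // => j Hj; rewrite nth_mkseq //; case: (HR' j).
exists (index (mkseq R n) (enumerate n n)); first by rewrite index_mem.
move=> k; rewrite nth_index //.
case: (ltnP k n) => Hk; first by rewrite nth_mkseq.
by rewrite nth_default ?size_mkseq //; case: (HR' k) => _ ->.
Qed.

Lemma emb_of (N1 N2 : Type) (X : Game N1) (Y : Game N2) f :
  trivial_for_Alice X -> trivial_for_Alice Y -> chronological X Y f ->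
  (forall s t, tree X s -> tree X t -> f s = f t -> s = t) -> game_embedding X Y f.
Proof.
move=> TX TY Hc Hi; split=> // R S HR HRS; split=> _; last by apply: TX.
apply: TY => k; rewrite -HRS; by case: (Hc _ (HR k)).
Qed.

Lemma id_emb n m : n <= m -> game_embedding (Fg n) (Fg m) id.
Proof.
move=> Hnm; apply: emb_of.
- exact: (Fg_FT n).2.
- exact: (Fg_FT m).2.
- move=> t Ht; split=> // j Hj; case: (Ht j Hj) => H1 H2; split; first by lia.
  by move=> Hmj; apply: H2; lia.
- by [].
Qed.

Lemma nth_le_sumn (t : seq nat) j : nth 0 t j <= sumn t.
Proof.
elim: t j => [|x t IH] [|j] //=; first by lia.
by have := IH j; lia.
Qed.

Lemma tn_bound t : tn (size t + sumn t) t.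
Proof.
move=> j Hj; split; first by have := nth_le_sumn t j; lia.
by move=> H; lia.
Qed.

Lemma bnd (R : nat -> nat) N0 : exists B, forall j, j < N0 -> R j <= B.
Proof.
elim: N0 => [|N0 [B HB]]; first by exists 0.
exists (maxn B (R N0)) => j; rewrite ltnS leq_eqVlt => /orP [/eqP ->|Hj]; first by lia.
by have := HB j Hj; lia.
Qed.

Lemma phi_mor n : A_morphism (Fg n) G_FL id.
Proof.
split; first by move=> t Ht; split.
move=> R S HR HRS; exists n => k Hk.
have Hk' : forall j, R j = S j.
  move=> j; have := HRS j.+1; rewrite /= => E.
  by have := congr1 (fun s => nth 0 s j) E; rewrite /= !nth_mkseq.
by rewrite -Hk'; case: ((accn_iff n R).1 HR k) => _ ->.
Qed.

Lemma colim : is_colimit_GamesA (M:=fun _ => nat) Fg (fun _ _ t => t) G_FL (fun _ t => t).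
Proof.
split.
- move=> n; exact: phi_mor.
- by move=> n m _ t.
move=> N H psi Hmor Hcomp.
pose h t := psi (size t + sumn t) t.
have key : forall n t, tn n t -> h t = psi n t.
  move=> n t Ht; rewrite /h.
  have E1 := Hcomp n (maxn n (size t + sumn t)) (leq_maxl _ _) t Ht.
  have E2 := Hcomp (size t + sumn t) (maxn n (size t + sumn t)) (leq_maxr _ _) t (tn_bound t).
  by rewrite /= in E1 E2; rewrite -E2 E1.
exists h; split.
- split.
  + move=> t _; have [Hc _] := Hmor (size t + sumn t).
    have [T1 T2 T3] := Hc t (tn_bound t).
    split=> // k; rewrite (key _ _ (tn_take _ _ k (tn_bound t))).
    exact: T3.
  + move=> R S [N0 HN0] HRS.
    have [B HB] := bnd R N0.
    have HR : accn (N0 + B) R.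
      apply/accn_iff => j; case: (ltnP j N0) => Hj.
        by move: (HB j Hj) => HBj; split; [lia | move=> ?; lia].
      by rewrite HN0 //.
    apply: ((Hmor (N0 + B)).2 R S HR) => k.
    by rewrite -(key _ _ (HR k)); apply: HRS.
- by move=> n t Ht; apply: key.
- move=> h' Hh' Hcm t _.
  by rewrite /h -(Hcm _ t (tn_bound t)).
Qed.

Lemma run_ext (N : Type) (X : Game N) t : tree X t -> exists R, Run X R /\ mkseq R (size t) = t.
Proof.
move=> Ht; have [x0 _] := tree_ext Ht.
have Hnx : forall u, exists x, tree X u -> tree X (rcons u x).
  move=> u; case: (classic (tree X u)) => Hu; last by exists x0.
  by have [x Hx] := tree_ext Hu; exists x.
pose nx u := proj1_sig (constructive_indefinite_description _ (Hnx u)).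
have Hnx' : forall u, tree X u -> tree X (rcons u (nx u)).
  by move=> u; rewrite /nx; case: (constructive_indefinite_description _ _).
pose p k := iter k (fun u => rcons u (nx u)) t.
have pS : forall k, p k.+1 = rcons (p k) (nx (p k)) by [].
have ptree : forall k, tree X (p k) by elim=> [|k IH] //; rewrite pS; apply: Hnx'.
have psize : forall k, size (p k) = size t + k.
  by elim=> [|k IH]; rewrite ?addn0 // pS size_rcons IH addnS.
have pcat : forall k d, exists w, p (k + d) = p k ++ w.
  move=> k; elim=> [|d [w Hw]]; first by exists [::]; rewrite addn0 cats0.
  by exists (rcons w (nx (p (k + d)))); rewrite addnS pS Hw rcons_cat.
pose R j := nth x0 (p j.+1) j.
have HR : forall k, mkseq R k = take k (p k).
  move=> k; apply: (eq_from_nth (x0:=x0)).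
    by rewrite size_mkseq size_take_min psize; lia.
  move=> j; rewrite size_mkseq => Hj; rewrite nth_mkseq // nth_take //.
  have [w Hw] := pcat j.+1 (k - j.+1).
  have -> : k = j.+1 + (k - j.+1) by lia.
  by rewrite /R Hw nth_cat psize; case: ltnP => //; lia.
exists R; split.
  by move=> k; rewrite HR; apply: tree_closed.
have [w Hw] := pcat 0 (size t).
by rewrite HR add0n in Hw *; rewrite Hw /= take_size_cat.
Qed.

Lemma fin_bound (Q : nat -> nat -> Prop) :
  (forall i L L', L <= L' -> Q i L -> Q i L') -> (forall i, exists L, Q i L) ->
  forall Nn, exists L, forall i, i < Nn -> Q i L.
Proof.
move=> Hm He; elim=> [|Nn [L HL]]; first by exists 0.
have [L' HL'] := He Nn.
exists (maxn L L') => i; rewrite ltnS leq_eqVlt => /orP [/eqP ->|Hi].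
  by apply: (Hm _ L'); first by apply: leq_maxr.
by apply: (Hm _ L); [apply: leq_maxl | apply: HL].
Qed.

Lemma rcons_last_take (s : seq nat) k : size s = k.+1 -> s = rcons (take k s) (last 0 s).
Proof.
move=> Hs; rewrite -nth_last Hs /= -take_nth; last by rewrite Hs.
by rewrite take_oversize // Hs.
Qed.

Lemma core (N : Type) (X : Game N) (n : nat) (D : seq nat -> Prop) (f : seq nat -> seq N) :
  finite_game X ->
  (forall s, D s -> tn n s) ->
  (forall s k, D s -> D (take k s)) ->
  (forall s, D s -> tree X (f s) /\ size (f s) = size s /\ (forall k, f (take k s) = take k (f s))) ->
  (forall s t, D s -> D t -> f s = f t -> s = t) ->
  exists m (g : seq N -> seq nat), [/\ n <= m, chronological X (Fg m) g,
     (forall s t, tree X s -> tree X t -> g s = g t -> s = t) & forall s, D s -> g (f s) = s].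
Proof.
move=> [Nn [e He]] HDn HDt Hf Hinj.
pose P i j L := (exists k, e i k <> e j k) -> exists k, k < L /\ e i k <> e j k.
have [L HL] : exists L, forall i, i < Nn -> forall j, j < Nn -> P i j L.
  apply: fin_bound.
    move=> i L L' HLL' H j Hj Hx; have [k [Hk Hk']] := H j Hj Hx.
    by exists k; split => //; lia.
  move=> i; apply: fin_bound.
    move=> j L L' HLL' H Hx; have [k [Hk Hk']] := H Hx.
    by exists k; split => //; lia.
  move=> j; case: (classic (exists k, e i k <> e j k)) => [[k Hk]|Hn].
    by exists k.+1 => _; exists k.
  by exists 0 => Hx.
pose m := n + Nn + L.
have branch : forall u1 u2 k, tree X u1 -> tree X u2 -> size u1 = k.+1 -> size u2 = k.+1 ->
    take k u1 = take k u2 -> u1 <> u2 -> k < L.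
  move=> u1 u2 k T1 T2 S1 S2 Ek Ne.
  have [R1 [HR1 E1]] := run_ext _ _ _ T1; have [R2 [HR2 E2]] := run_ext _ _ _ T2.
  have [i1 Hi1 Ei1] := He R1 HR1; have [i2 Hi2 Ei2] := He R2 HR2.
  rewrite S1 in E1; rewrite S2 in E2.
  have Em : mkseq R1 k = mkseq R2 k.
    have H1 := congr1 (take k) E1; have H2 := congr1 (take k) E2.
    rewrite /= take_mkseq (minn_idPl (leqnSn k)) in H1.
    rewrite /= take_mkseq (minn_idPl (leqnSn k)) in H2.
    by rewrite H1 H2.
  have Dk : R1 k <> R2 k.
    by move=> Ek'; apply: Ne; rewrite -E1 -E2 !mkseqS Em Ek'.
  have [k' [Hk' Ne']] : exists k', k' < L /\ e i1 k' <> e i2 k'.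
    by apply: (HL i1 Hi1 i2 Hi2); exists k; rewrite -Ei1 -Ei2.
  case: (ltnP k' k) => Hkk; last by lia.
  exfalso; apply: Ne'; rewrite -Ei1 -Ei2.
  by have := congr1 (fun s => nth (R1 0) s k') Em; rewrite /= !nth_mkseq.
pose lab (u : seq N) : nat := if m < size u then 0 else
    match excluded_middle_informative (exists s, D s /\ f s = u) with
    | left H => last 0 (proj1_sig (constructive_indefinite_description _ H))
    | right _ => match excluded_middle_informative (exists i, i < Nn /\ mkseq (e i) (size u) = u) with
       | left H => n.+1 + proj1_sig (constructive_indefinite_description _ H)
       | right _ => 0 end end.
have lab_big : forall u, m < size u -> lab u = 0 by move=> u Hu; rewrite /lab Hu.
have lab_img : forall s, D s -> size s <= m -> lab (f s) = last 0 s.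
  move=> s Ds Hs; have [_ [Sf _]] := Hf s Ds.
  rewrite /lab Sf ltnNge Hs /=.
  case: (excluded_middle_informative _) => [H|H]; last by exfalso; apply: H; exists s.
  case: (constructive_indefinite_description _ H) => s' [Ds' Es'] /=.
  by rewrite (Hinj _ _ Ds' Ds Es').
have lab_nimg : forall u, tree X u -> size u <= m -> ~ (exists s, D s /\ f s = u) ->
    exists i, [/\ i < Nn, mkseq (e i) (size u) = u & lab u = n.+1 + i].
  move=> u Tu Hu Hni; rewrite /lab ltnNge Hu /=.
  case: (excluded_middle_informative _) => [H|_]; first by exfalso.
  case: (excluded_middle_informative _) => [H|H].
    by case: (constructive_indefinite_description _ H) => i [Hi Ei] /=; exists i.
  exfalso; apply: H.
  have [R [HR ER]] := run_ext _ _ _ Tu; have [i Hi Ei] := He R HR.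
  by exists i; split => //; rewrite -{2}ER; exact: (eq_mkseq (fun k => esym (Ei k)) (size u)).
have last_le : forall s, D s -> 0 < size s -> last 0 s <= n.
  move=> s Ds Hs; rewrite -nth_last; by case: (HDn s Ds (size s).-1 ltac:(lia)).
have sibling : forall u1 u2 k, tree X u1 -> tree X u2 -> size u1 = k.+1 -> size u2 = k.+1 ->
    take k u1 = take k u2 -> lab u1 = lab u2 -> u1 = u2.
  move=> u1 u2 k T1 T2 S1 S2 Ek El.
  case: (classic (u1 = u2)) => // Ne; exfalso.
  have kL := branch u1 u2 k T1 T2 S1 S2 Ek Ne.
  case: (ltnP k m) => Hkm; last by rewrite /m in Hkm; lia.
  have Hs1 : size u1 <= m by lia.
  have Hs2 : size u2 <= m by lia.
  case: (classic (exists s, D s /\ f s = u1)) => [[s1 [D1 E1]]|N1];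
  case: (classic (exists s, D s /\ f s = u2)) => [[s2 [D2 E2]]|N2].
  - have [_ [Sf1 Tk1]] := Hf s1 D1; have [_ [Sf2 Tk2]] := Hf s2 D2.
    rewrite -E1 -E2 !lab_img // in El; try by rewrite -?Sf1 -?Sf2 ?E1 ?E2.
    apply: Ne; rewrite -E1 -E2; congr f.
    have Sz1 : size s1 = k.+1 by rewrite -Sf1 E1.
    have Sz2 : size s2 = k.+1 by rewrite -Sf2 E2.
    have Et : take k s1 = take k s2.
      by apply: Hinj; rewrite ?Tk1 ?Tk2 ?E1 ?E2 //; apply: HDt.
    by rewrite (rcons_last_take s1 k Sz1) (rcons_last_take s2 k Sz2) Et El.
  - have [_ [Sf1 _]] := Hf s1 D1.
    have [i [Hi _ Ei]] := lab_nimg u2 T2 Hs2 N2.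
    rewrite -E1 lab_img // in El; last by rewrite -Sf1 E1.
    have := last_le s1 D1 ltac:(rewrite -Sf1 E1 S1 //); lia.
  - have [_ [Sf2 _]] := Hf s2 D2.
    have [i [Hi _ Ei]] := lab_nimg u1 T1 Hs1 N1.
    rewrite -E2 lab_img // in El; last by rewrite -Sf2 E2.
    have := last_le s2 D2 ltac:(rewrite -Sf2 E2 S2 //); lia.
  - have [i1 [Hi1 Ei1 El1]] := lab_nimg u1 T1 Hs1 N1.
    have [i2 [Hi2 Ei2 El2]] := lab_nimg u2 T2 Hs2 N2.
    have Ei : i1 = i2 by lia.
    by apply: Ne; rewrite -Ei1 -Ei2 S1 S2 Ei.
pose g (t : seq N) := mkseq (fun j => lab (take j.+1 t)) (size t).
exists m, g; split.
- rewrite /m; lia.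
- move=> t Tt; split.
  + move=> j; rewrite size_mkseq => Hj; rewrite nth_mkseq //.
    have Su : size (take j.+1 t) = j.+1 by rewrite size_takel.
    case: (ltnP j m) => Hjm; last first.
      by rewrite lab_big ?Su //; split => //.
    split; last by lia.
    have Tu : tree X (take j.+1 t) by apply: tree_closed.
    case: (classic (exists s, D s /\ f s = take j.+1 t)) => [[s [Ds Es]]|Ni].
      have [_ [Sf _]] := Hf s Ds.
      rewrite -Es lab_img //; last by rewrite -Sf Es Su.
      have := last_le s Ds ltac:(rewrite -Sf Es Su //); rewrite /m; lia.
    have [i [Hi _ Ei]] := lab_nimg _ Tu ltac:(rewrite Su //) Ni.
    by rewrite Ei /m; lia.
  + by rewrite size_mkseq.
  + move=> k; apply: (eq_from_nth (x0:=0)); first by rewrite size_take_min !size_mkseq size_take_min.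
    rewrite size_mkseq size_take_min => j Hj.
    rewrite nth_take; last by lia.
    rewrite !nth_mkseq ?size_take_min; try lia.
    by rewrite take_takel //; lia.
- move=> s t Ts Tt Eg.
  have Sz : size s = size t by rewrite -(size_mkseq (fun j => lab (take j.+1 s)) (size s)) -/(g s) Eg size_mkseq.
  suff H : forall k, k <= size s -> take k s = take k t.
    by rewrite -(take_size s) H // Sz take_size.
  elim=> [|k IH] Hk; first by rewrite !take0.
  have Hks : k < size s by lia.
  apply: (sibling _ _ k); try (apply: tree_closed; done); try (rewrite size_takel; lia).
    by rewrite !take_takel // IH //; lia.
  have := congr1 (fun u => nth 0 u k) Eg; rewrite /g /= !nth_mkseq //; lia.
- move=> s Ds; have [_ [Sf Tk]] := Hf s Ds.
  apply: (eq_from_nth (x0:=0)); first by rewrite size_mkseq Sf.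
  rewrite size_mkseq Sf => j Hj; rewrite nth_mkseq ?Sf // -Tk.
  have Dj := HDt s j.+1 Ds.
  have Sj : size (take j.+1 s) = j.+1 by rewrite size_takel.
  case: (ltnP j m) => Hjm.
    rewrite lab_img // ?Sj // -nth_last Sj /= nth_take //.
  rewrite lab_big; last by have [_ [-> _]] := Hf _ Dj; rewrite Sj.
  by case: (HDn s Ds j Hj) => _ ->; rewrite /m in Hjm *; lia.
Qed.

Theorem mainTheorem11 :
  exists (M : nat -> Type) (F : forall n, Game (M n))
         (Fmap : forall n m, seq (M n) -> seq (M m))
         (phi : forall n, seq (M n) -> seq nat),
    fraisse_sequence F Fmap /\ is_colimit_GamesA F Fmap G_FL phi.
Proof.
exists (fun _ => nat), Fg, (fun _ _ t => t), (fun _ t => t); split; last exact: colim.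
split; [split|split].
- exact: Fg_FT.
- exact: id_emb.
- by [].
- by [].
- move=> N X [Hfin Htr].
  have [m [g [_ Hc Hi _]]] := core N X 0 (fun _ => False) (fun _ => [::]) Hfin
     (fun s H => False_ind _ H) (fun s k H => H) (fun s H => False_ind _ H) (fun s t H => False_ind _ H).
  exists m, g; exact: emb_of Htr (Fg_FT m).2 Hc Hi.
- move=> n N X f [Hfin Htr] [Hc Hi _].
  have Hf : forall s, tn n s -> tree X (f s) /\ size (f s) = size s /\ (forall k, f (take k s) = take k (f s)).
    by move=> s Hs; case: (Hc s Hs).
  have [m [g [Hnm Hcg Hig Hgf]]] := core N X n (tn n) f Hfin (fun s H => H) (tn_take n) Hf Hi.
  exists m, g; split => //; first exact: emb_of Htr (Fg_FT m).2 Hcg Hig.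
Qed.
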